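(* Let $G_1$ ($n\times k$) and $G_0$ ($n\times l$) be fixed binary matrices with $\widetilde G=[G_1\ G_0]$ of full column rank, let $\mathbf m\in\{0,1\}^k$ be fixed, and let $t_1=\lfloor (d_1-1)/2\rfloor$. On the binary defect and symmetric channel with two-step encoding and any decoder satisfying the bounded-distance property described in the context, $$P(\widehat{\mathbf m}\neq\mathbf m)\le\sum_{u=d_0}^{n}\left\{\binom nu\beta^u(1-\beta)^{n-u}\min\left\{\frac{\sum_{w=d_0}^{u}B_{0,w}\binom{n-w}{u-w}}{\binom nu},1\right\}\sum_{t=\max(0,\,t_1+d_0-u)}^{n}\binom nt p^t(1-p)^{n-t}\right\}+\sum_{t=t_1+1}^{n}\binom nt p^t(1-p)^{n-t}.$$
   Context: All arithmetic is over $\mathrm{GF}(2)$. $\mathcal C_0^{\perp}=\{\mathbf x\in\{0,1\}^n: G_0^T\mathbf x=\mathbf 0\}$; $B_{0,w}$ is its number of vectors of Hamming weight $w$ and $d_0$ its minimum nonzero weight. $d_1$ is the minimum Hamming weight of $G_1\mathbf m'+G_0\mathbf d'$ over all $\mathbf m'\neq\mathbf 0$, $\mathbf d'\in\{0,1\}^l$. Binary defect and symmetric channel (BDSC) with parameters $(\beta,p)$: each of the $n$ cells is independently defective with probability $\beta$; a defective cell is stuck at $0$ or $1$, each with probability $1/2$, independently; $\mathcal U$ is the set of defects, $U=|\mathcal U|$, $\mathbf s$ the stuck-at values. Writing codeword $\mathbf c$ stores $\mathbf c\circ\mathbf s$, where $(\mathbf c\circ\mathbf s)_i=s_i$ for $i\in\mathcal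 U$ and $c_i$ otherwise; the read vector is $\mathbf y=\mathbf c\circ\mathbf s+\mathbf z$, with $\mathbf z$ having i.i.d. $\mathrm{Bernoulli}(p)$ entries independent of the defects. For a matrix/vector, superscript $\mathcal A$ denotes the rows indexed by $\mathcal A$. Two-step encoding: let $\mathbf b^{\mathcal U}=(G_1\mathbf m)^{\mathcal U}+\mathbf s^{\mathcal U}$. Step 1: if $G_0^{\mathcal U}\mathbf d=\mathbf b^{\mathcal U}$ has a solution $\mathbf d$, use it ($E=1$). Otherwise ($E=0$; this requires $U\ge d_0$), Step 2: choose any $\mathcal U'\subseteq\mathcal U$ with $|\mathcal U'|=d_0-1$ and take $\mathbf d$ solving $G_0^{\mathcal U'}\mathbf d=\mathbf b^{\mathcal U'}$ (such a solution always exists since any $d_0-1$ rows of $G_0$ are linearly independent). The stored codeword is $\mathbf c=G_1\mathbf m+G_0\mathbf d$. Decoder: any map $\mathbf y\mapsto\widehat{\mathbf m}$ such that $\widehat{\mathbf m}=\mathbf m$ whenever $\mathbf y$ and $\mathbf c$ differ in at most $t_1$ positions (e.g. bounded-distance decoding of the code generated by $\widetilde G$). *)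

(* Defs.v *)
From HB Require Import structures.
From mathcomp Require Import all_boot all_order all_algebra.
Set Implicit Arguments. Unset Strict Implicit. Unset Printing Implicit Defensive.
Import Order.TTheory GRing.Theory Num.Theory.
Local Open Scope ring_scope.

Notation bvec n := 'cV['F_2]_n.

Definition wt n (x : bvec n) : nat := #|[set i : 'I_n | x i 0 != 0]|.

Definition dual_code n l (G0 : 'M['F_2]_(n, l)) : {set bvec n} :=
  [set x : bvec n | G0^T *m x == 0].

Definition B0 n l (G0 : 'M['F_2]_(n, l)) (w : nat) : nat :=
  #|[set x in dual_code G0 | wt x == w]|.

(* d_0: minimum nonzero weight of C0^perp (n+1 if C0^perp = {0}). *)
Definition d0 n l (G0 : 'M['F_2]_(n, l)) : nat :=
  \big[minn/n.+1]_(x in dual_code G0 | x != 0) wt x.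

(* d_1: min weight of G1 m' + G0 d' over m' <> 0 (n+1 if k = 0). *)
Definition d1 n k l (G1 : 'M['F_2]_(n, k)) (G0 : 'M['F_2]_(n, l)) : nat :=
  \big[minn/n.+1]_(md : bvec k * bvec l | md.1 != 0)
     wt (G1 *m md.1 + G0 *m md.2).

Definition rows_solve n l (A : {set 'I_n}) (G0 : 'M['F_2]_(n, l))
  (d : bvec l) (b : bvec n) : Prop :=
  forall i, i \in A -> (G0 *m d) i 0 = b i 0.

Definition two_step_encoder n k l (G1 : 'M['F_2]_(n, k)) (G0 : 'M['F_2]_(n, l))
  (m : bvec k) (enc : {set 'I_n} -> bvec n -> bvec l) : Prop :=
  forall (U : {set 'I_n}) (s : bvec n),
    let b := G1 *m m + s in
    ((exists d, rows_solve U G0 d b) -> rows_solve U G0 (enc U s) b) /\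
    (~ (exists d, rows_solve U G0 d b) ->
       exists2 U' : {set 'I_n}, (U' \subset U) && (#|U'| == (d0 G0).-1)
                              & rows_solve U' G0 (enc U s) b).

Definition stuck n (U : {set 'I_n}) (c s : bvec n) : bvec n :=
  \col_i (if i \in U then s i 0 else c i 0).

(* Probability of decoding error on the BDSC(beta,p):
   sum over defect sets U, stuck values s (on U; zero off U, uniform on U)
   and noise vectors z. *)
Definition err_prob (R : realFieldType) n k l
  (G1 : 'M['F_2]_(n, k)) (G0 : 'M['F_2]_(n, l)) (m : bvec k)
  (enc : {set 'I_n} -> bvec n -> bvec l) (dec : bvec n -> bvec k)
  (beta p : R) : R :=
  \sum_(U : {set 'I_n})
   \sum_(s : bvec n | [forall i, (i \notin U) ==> (s i 0 == 0)])
   \sum_(z : bvec n)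
     (beta ^+ #|U| * (1 - beta) ^+ (n - #|U|) * (2%:R ^- #|U|)
      * (p ^+ wt z * (1 - p) ^+ (n - wt z))
      * (dec (stuck U (G1 *m m + G0 *m enc U s) s + z) != m)%:R).

(* Main.v *)
Require Import Defs.
From HB Require Import structures.
From mathcomp Require Import all_boot all_order all_algebra.
From Stdlib Require Import Classical_Prop.
From mathcomp Require Import zify.
Set Implicit Arguments. Unset Strict Implicit. Unset Printing Implicit Defensive.
Import Order.TTheory GRing.Theory Num.Theory.
Local Open Scope ring_scope.

Lemma F2_cases (a : 'F_2) : a = 0 \/ a = 1.
Proof. by case: a => [[|[|?]]] //= H; [left|right]; apply/val_inj. Qed.

Lemma F2_addxx (a : 'F_2) : a + a = 0.
Proof. by case: (F2_cases a) => ->; [rewrite addr0 | apply: val_inj; compute]. Qed.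

Lemma F2_neq0 (a : 'F_2) : a != 0 -> a = 1.
Proof. by case: (F2_cases a) => ->; rewrite ?eqxx. Qed.

Definition supp n (x : bvec n) : {set 'I_n} := [set i | x i 0 != 0].
Definition vec_of n (A : {set 'I_n}) : bvec n := \col_i (i \in A)%:R.

Lemma wt_supp n (x : bvec n) : wt x = #|supp x|.
Proof. by []. Qed.

Lemma supp_vec_of n (A : {set 'I_n}) : supp (vec_of A) = A.
Proof. by apply/setP=> i; rewrite !inE mxE; case: (i \in A); rewrite ?eqxx ?oner_eq0. Qed.

Lemma vec_of_supp n (x : bvec n) : vec_of (supp x) = x.
Proof.
apply/matrixP=> i j; rewrite !mxE inE (ord1 j).
by case: eqP => [->|/eqP/F2_neq0 ->].
Qed.

Lemma vec_of_bij n : bijective (@vec_of n).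
Proof. by exists (@supp n); [apply: supp_vec_of | apply: vec_of_supp]. Qed.

Lemma wt_vec_of n (A : {set 'I_n}) : wt (vec_of A) = #|A|.
Proof. by rewrite wt_supp supp_vec_of. Qed.

Lemma wt_le n (x : bvec n) (A : {set 'I_n}) :
  (forall i, i \notin A -> x i 0 = 0) -> (wt x <= #|A|)%N.
Proof.
move=> H; apply: subset_leq_card; apply/subsetP=> i; rewrite inE.
by apply: contraR => /H ->; rewrite eqxx.
Qed.

Lemma wt_add n (a b : bvec n) : (wt (a + b) <= wt a + wt b)%N.
Proof.
rewrite !wt_supp; apply: leq_trans (leq_card_setU _ _).
apply: subset_leq_card; apply/subsetP=> i; rewrite !inE mxE.
by apply: contraR; rewrite negb_or !negbK => /andP[/eqP-> /eqP->]; rewrite addr0.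
Qed.

Lemma sum_vec (R : realFieldType) n (P : pred (bvec n)) (F : bvec n -> R) :
  \sum_(z | P z) F z = \sum_(A : {set 'I_n} | P (vec_of A)) F (vec_of A).
Proof. exact: (reindex (@vec_of n) (onW_bij _ (vec_of_bij n))). Qed.

Lemma sum_card (R : realFieldType) n (f : nat -> R) :
  \sum_(A : {set 'I_n}) f #|A| = \sum_(t < n.+1) 'C(n, t)%:R * f t.
Proof.
rewrite (partition_big (fun A : {set 'I_n} => (inord #|A| : 'I_n.+1)) predT) //=.
apply: eq_bigr => t _.
have HA : forall A : {set 'I_n}, (inord #|A| == t :> 'I_n.+1) = (#|A| == t).
  move=> A; rewrite -val_eqE /= inordK // ltnS.
  by apply: leq_trans (max_card _) _; rewrite card_ord.
rewrite (eq_bigl (fun A : {set 'I_n} => A \in [set A : {set 'I_n} | #|A| == t])); last first.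
  by move=> A; rewrite inE HA.
rewrite (eq_bigr (fun _ => f t)); last by move=> A; rewrite inE => /eqP ->.
by rewrite sumr_const card_draws card_ord mulr_natl.
Qed.

Lemma sum_wt (R : realFieldType) n (f : nat -> R) :
  \sum_(z : bvec n) f (wt z) = \sum_(t < n.+1) 'C(n, t)%:R * f t.
Proof.
rewrite (sum_vec xpredT (fun z => f (wt z))) -sum_card.
by apply: eq_bigr => A _; rewrite wt_vec_of.
Qed.

Definition Sset n (U : {set 'I_n}) : {set bvec n} :=
  [set s : bvec n | [forall i, (i \notin U) ==> (s i 0 == 0)]].

Lemma card_Sset n (U : {set 'I_n}) : #|Sset U| = (2 ^ #|U|)%N.
Proof.
rewrite -card_powerset.
have -> : Sset U = (@vec_of n) @: powerset U.
  apply/setP=> s; rewrite inE; apply/forallP/imsetP.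
    move=> H; exists (supp s); last by rewrite vec_of_supp.
    rewrite inE; apply/subsetP=> i; rewrite inE; apply: contraR => iU.
    by move/implyP: (H i) => /(_ iU) ->.
  case=> A; rewrite inE => /subsetP AU -> i; apply/implyP => iU.
  by rewrite mxE; case: (boolP (i \in A)) => // /AU; rewrite (negbTE iU).
by rewrite card_imset //; apply: bij_inj; apply: vec_of_bij.
Qed.

Lemma sum_delta n (a : 'I_n) (F : 'I_n -> 'F_2) :
  \sum_(k < n) (a == k)%:R * F k = F a.
Proof.
rewrite (bigD1 a) //= eqxx mul1r big1 ?addr0 // => k.
by rewrite eq_sym => /negbTE ->; rewrite mul0r.
Qed.

Section LinAlg.
Variables (n l : nat) (G0 : 'M['F_2]_(n, l)) (U : {set 'I_n}).

Definition Pm : 'M['F_2]_(#|U|, n) := \matrix_(i, j) (@enum_val _ (mem U) i == j)%:R.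

Lemma Pm_mul p (Y : 'M['F_2]_(n, p)) i j : (Pm *m Y) i j = Y (enum_val i) j.
Proof.
rewrite mxE -[RHS](sum_delta (enum_val i) (fun k => Y k j)).
by apply: eq_bigr => k _; rewrite mxE.
Qed.

Lemma PmPmT : Pm *m Pm^T = 1%:M.
Proof.
apply/matrixP=> i j; rewrite Pm_mul !mxE.
by rewrite (inj_eq enum_val_inj) eq_sym.
Qed.

Lemma no_solve_dual b :
  ~ (exists d, rows_solve U G0 d b) ->
  exists x : bvec n, [&& x \in dual_code G0, x != 0 & supp x \subset U].
Proof.
move=> Hns; case: (boolP (row_free (Pm *m G0))) => [/row_freeP [N HN] | Hnf].
  exfalso; apply: Hns; exists (N *m (Pm *m b)) => i iU.
  have := Pm_mul (G0 *m (N *m (Pm *m b))) (enum_rank_in iU i) 0.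
  rewrite (enum_rankK_in iU iU) => <-.
  by rewrite mulmxA mulmxA HN mul1mx Pm_mul (enum_rankK_in iU iU).
move: Hnf; rewrite -kermx_eq0 => /rowV0Pn [v /sub_kermxP Hv vn0].
exists (v *m Pm)^T; apply/and3P; split.
- by rewrite inE -trmx_mul -mulmxA Hv trmx0.
- apply: contra vn0 => /eqP H0; apply/eqP.
  have : (v *m Pm) *m Pm^T = 0 by rewrite -[v *m Pm]trmxK H0 trmx0 mul0mx.
  by rewrite -mulmxA PmPmT mulmx1.
- apply/subsetP=> j; rewrite inE mxE mxE; apply: contraR => jU.
  rewrite big1 ?eqxx // => i _; rewrite mxE.
  case: eqP => [Hij|]; last by rewrite mulr0.
  by move: (enum_valP i); rewrite Hij (negbTE jU).
Qed.
End LinAlg.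

Lemma bigmin_le_seq (I : eqType) (r : seq I) (P : pred I) (F : I -> nat) a x :
  x \in r -> P x -> (\big[minn/a]_(i <- r | P i) F i <= F x)%N.
Proof.
elim: r => //= j r IH; rewrite inE big_cons => /orP [/eqP <- Px | xr Px].
  by rewrite Px geq_minl.
case: (P j); last exact: IH.
exact: leq_trans (geq_minr _ _) (IH xr Px).
Qed.

Lemma d0_le n l (G0 : 'M['F_2]_(n, l)) x :
  x \in dual_code G0 -> x != 0 -> (d0 G0 <= wt x)%N.
Proof.
move=> xd xn0; rewrite /d0; apply: bigmin_le_seq; first by rewrite mem_index_enum.
by rewrite xd xn0.
Qed.

Lemma card_supsets n (A : {set 'I_n}) u : (#|A| <= u)%N -> (u <= n)%N ->
  #|[set U : {set 'I_n} | A \subset U & #|U| == u]| = 'C(n - #|A|, u - #|A|).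
Proof.
move=> Au un.
have cC : forall B : {set 'I_n}, #|~: B| = (n - #|B|)%N.
  by move=> B; rewrite cardsCs setCK card_ord.
have -> : [set U : {set 'I_n} | A \subset U & #|U| == u] =
          (@setC _) @: [set V : {set 'I_n} | V \subset ~: A & #|V| == (n - u)%N].
  apply/setP=> U; rewrite inE; apply/andP/imsetP.
    case=> AU /eqP cU; exists (~: U); last by rewrite setCK.
    by rewrite inE setCS AU cC cU eqxx.
  case=> V; rewrite inE => /andP [VA /eqP cV] ->; split.
    by rewrite -setCS setCK.
  by rewrite cC cV subKn.
rewrite card_imset; last exact: (@setC_inj _).
rewrite cards_draws cC.
have -> : (n - u = (n - #|A|) - (u - #|A|))%N by rewrite subnBA // subnK // (leq_trans Au).
rewrite bin_sub //; exact: leq_sub2r.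
Qed.

Definition Xs n l (G0 : 'M['F_2]_(n, l)) (U : {set 'I_n}) : {set bvec n} :=
  [set x : bvec n | [&& x \in dual_code G0, x != 0 & supp x \subset U]].

Lemma sum_delta_nat m (P : pred nat) (a : nat) (f : nat -> nat) :
  (a < m)%N -> P a -> (\sum_(w < m | P w) (a == w) * f w)%N = f a.
Proof.
move=> am Pa; rewrite (bigD1 (Ordinal am)) //= eqxx mul1n big1 ?addn0 //.
by move=> w /andP [_ H]; rewrite -val_eqE /= eq_sym in H; rewrite (negbTE H).
Qed.

Lemma count_bound n l (G0 : 'M['F_2]_(n, l)) u : (u <= n)%N ->
  (\sum_(U : {set 'I_n} | #|U| == u) #|Xs G0 U| <=
   \sum_(d0 G0 <= w < u.+1) B0 G0 w * 'C(n - w, u - w))%N.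
Proof.
move=> un.
have E1 : forall U, #|Xs G0 U| =
    (\sum_(x : bvec n | (x \in dual_code G0) && (x != 0%R)) (supp x \subset U))%N.
  move=> U; rewrite -sum1_card big_mkcond /= [RHS]big_mkcond /=.
  by apply: eq_bigr => x _; rewrite inE; case: (x \in dual_code G0); case: (x != 0%R); case: (supp x \subset U).
rewrite (eq_bigr _ (fun U _ => E1 U)) exchange_big /=.
rewrite big_geq_mkord /=.
apply: leq_trans (_ : \sum_(x : bvec n | (x \in dual_code G0) && (x != 0%R))
     \sum_(w < u.+1 | d0 G0 <= w) (wt x == w) * 'C(n - w, u - w) <= _)%N.
  apply: leq_sum => x /andP [xd xn0].
  have Hc : (\sum_(U : {set 'I_n} | #|U| == u) (supp x \subset U))%N =
            #|[set U : {set 'I_n} | supp x \subset U & #|U| == u]|.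
    rewrite -sum1_card big_mkcond /= [RHS]big_mkcond /=.
    by apply: eq_bigr => U _; rewrite inE; case: (#|U| == u); case: (supp x \subset U); rewrite ?andbF.
  rewrite Hc; case: (leqP (wt x) u) => [xu | ux].
    rewrite (@sum_delta_nat u.+1 (fun w => d0 G0 <= w)%N (wt x) (fun w => 'C(n - w, u - w))) ?ltnS //;
      last exact: d0_le.
    by rewrite card_supsets // -wt_supp.
  suff -> : #|[set U : {set 'I_n} | supp x \subset U & #|U| == u]| = 0%N by [].
  apply/eqP; rewrite cards_eq0; apply/eqP/setP => U; rewrite !inE.
  apply/negP => /andP [/subset_leq_card H /eqP cU].
  by move: ux; rewrite wt_supp ltnNge -cU H.
rewrite exchange_big /=; apply: leq_sum => w _.
rewrite -big_distrl /= leq_mul2r; apply/orP; right.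
rewrite /B0 -sum1_card big_mkcond /= [X in (_ <= X)%N]big_mkcond /=.
apply: leq_sum => x _; rewrite !inE.
by case: (G0^T *m x == 0); case: (x != 0%R); case: (wt x == w).
Qed.

Lemma stuck_agree n l (G0 : 'M['F_2]_(n, l)) (V : {set 'I_n}) g s d i :
  rows_solve V G0 d (g + s) -> i \in V -> (g + G0 *m d) i 0 = s i 0.
Proof.
move=> H iV; rewrite mxE (H i iV) mxE addrA.
by rewrite F2_addxx add0r.
Qed.

Lemma stuckE n (U : {set 'I_n}) c s i : stuck U c s i 0 = if i \in U then s i 0 else c i 0.
Proof. by rewrite mxE. Qed.

Lemma subE n (A B : bvec n) i : (A - B) i 0 = A i 0 - B i 0.
Proof. by rewrite !mxE. Qed.

Lemma wt_stuck n l (G0 : 'M['F_2]_(n, l)) (U V : {set 'I_n}) g d s :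
  rows_solve V G0 d (g + s) ->
  (wt (stuck U (g + G0 *m d) s - (g + G0 *m d)) <= #|U :\: V|)%N.
Proof.
move=> HV; apply: wt_le => i; rewrite inE negb_and negbK => Hi.
rewrite subE stuckE; case: (boolP (i \in U)) => iU; last by rewrite subrr.
rewrite iU orbF in Hi.
by rewrite -(stuck_agree HV Hi) subrr.
Qed.

Lemma pointwise n k l (G1 : 'M['F_2]_(n, k)) (G0 : 'M['F_2]_(n, l)) m enc dec
  (t1 : nat) U s z :
  two_step_encoder G1 G0 m enc ->
  (forall (d : 'cV['F_2]_l) (y : 'cV['F_2]_n),
      (wt (y - (G1 *m m + G0 *m d)) <= t1)%N -> dec y = m) ->
  dec (stuck U (G1 *m m + G0 *m enc U s) s + z) != m ->
  ((0 < #|Xs G0 U|)%N && (t1 + d0 G0 - #|U| <= wt z)%N) || (t1 < wt z)%N.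
Proof.
move=> Henc Hdec Herr.
have Hyc : forall c : bvec n, stuck U c s + z - c = (stuck U c s - c) + z.
  by move=> c; rewrite addrAC.
case: (boolP (t1 < wt z)%N) => Ht; first by rewrite orbT.
rewrite orbF -leqNgt in Ht *.
have [Hex Hnex] := (Henc U s).
case: (classic (exists d, rows_solve U G0 d (G1 *m m + s))) => Hs.
  exfalso; move/eqP: Herr; apply; apply: (Hdec (enc U s)).
  rewrite Hyc; apply: leq_trans (wt_add _ _) _.
  have := wt_stuck U (Hex Hs); rewrite setDv cards0 leqn0 => /eqP ->.
  by [].
have [x /and3P [xd xn0 xU]] := no_solve_dual Hs.
apply/andP; split.
  by apply/card_gt0P; exists x; rewrite inE xd xn0 xU.
have [U' /andP [U'U /eqP cU'] HU'] := Hnex Hs.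
rewrite leqNgt; apply/negP => Hlt; move/eqP: Herr; apply; apply: (Hdec (enc U s)).
rewrite Hyc; apply: leq_trans (wt_add _ _) _.
have := wt_stuck U HU'; rewrite cardsD (setIidPr U'U) cU' => Hw.
have : (#|U'| <= #|U|)%N by apply: subset_leq_card.
rewrite cU'; move: Hw Hlt; rewrite -subn1; move: (wt (_ - _)) (wt z) (d0 G0) #|U| => a b c e; lia.
Qed.

Lemma sum_part (R : realFieldType) n (F : {set 'I_n} -> R) :
  \sum_(A : {set 'I_n}) F A = \sum_(u < n.+1) \sum_(A : {set 'I_n} | #|A| == u) F A.
Proof.
rewrite (partition_big (fun A : {set 'I_n} => (inord #|A| : 'I_n.+1)) predT) //=.
apply: eq_bigr => t _; apply: eq_bigl => A.
rewrite -val_eqE /= inordK // ltnS.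
by apply: leq_trans (max_card _) _; rewrite card_ord.
Qed.

Lemma sum_binom1 (R : realFieldType) n (b : R) :
  \sum_(A : {set 'I_n}) b ^+ #|A| * (1 - b) ^+ (n - #|A|) = 1.
Proof.
rewrite (@sum_card R n (fun t => b ^+ t * (1 - b) ^+ (n - t))).
transitivity ((1 - b + b) ^+ n); last by rewrite subrK expr1n.
rewrite exprDn; apply: eq_bigr => i _; by rewrite -[RHS]mulr_natl [_ * b ^+ i]mulrC.
Qed.

Lemma sum_tail (R : realFieldType) n (p : R) (a : nat) :
  \sum_(z : bvec n) p ^+ wt z * (1 - p) ^+ (n - wt z) * (a <= wt z)%:R =
  \sum_(a <= t < n.+1) 'C(n, t)%:R * p ^+ t * (1 - p) ^+ (n - t).
Proof.
rewrite (@sum_wt R n (fun t => p ^+ t * (1 - p) ^+ (n - t) * (a <= t)%:R)).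
rewrite big_geq_mkord /= [RHS]big_mkcond /=; apply: eq_bigr => t _.
by case: (a <= t)%N; rewrite ?mulr1 ?mulr0 ?mulrA.
Qed.

Lemma min_bound (R : realFieldType) (Y S C : R) :
  0 < C -> Y <= S -> Y <= C -> Y <= C * Num.min (S / C) 1.
Proof.
move=> C0 YS YC; rewrite -ler_pdivrMl // le_min; apply/andP; split.
  by rewrite mulrC ler_pM2r // invr_gt0.
by rewrite ler_pdivrMl // mulr1.
Qed.

Unset Implicit Arguments. Set Strict Implicit.
From mathcomp Require Import ring.
Theorem theorem5 (R : realFieldType) (n k l : nat)
  (G1 : 'M['F_2]_(n, k)) (G0 : 'M['F_2]_(n, l)) (m : 'cV['F_2]_k)
  (beta p : R)
  (enc : {set 'I_n} -> 'cV['F_2]_n -> 'cV['F_2]_l)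
  (dec : 'cV['F_2]_n -> 'cV['F_2]_k) :
  \rank (row_mx G1 G0) = (k + l)%N ->
  0 <= beta <= 1 -> 0 <= p <= 1 ->
  two_step_encoder G1 G0 m enc ->
  (forall (d : 'cV['F_2]_l) (y : 'cV['F_2]_n),
      (wt (y - (G1 *m m + G0 *m d)) <= (d1 G1 G0).-1./2)%N -> dec y = m) ->
  let t1 := (d1 G1 G0).-1./2 in
  let dd0 := d0 G0 in
  err_prob G1 G0 m enc dec beta p <=
    \sum_(dd0 <= u < n.+1)
      ('C(n, u)%:R * beta ^+ u * (1 - beta) ^+ (n - u)
       * Num.min ((\sum_(dd0 <= w < u.+1) (B0 G0 w * 'C(n - w, u - w))%:R)
                    / 'C(n, u)%:R) 1
       * \sum_((t1 + dd0 - u)%N <= t < n.+1)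
           'C(n, t)%:R * p ^+ t * (1 - p) ^+ (n - t))
    + \sum_(t1.+1 <= t < n.+1) 'C(n, t)%:R * p ^+ t * (1 - p) ^+ (n - t).
Proof.
move=> _ /andP [b0 b1] /andP [p0 p1] Henc Hdec; cbv zeta.
set t1 := (d1 G1 G0).-1./2. set dd0 := d0 G0.
set q := fun z : bvec n => p ^+ wt z * (1 - p) ^+ (n - wt z).
set PU := fun u : nat => beta ^+ u * (1 - beta) ^+ (n - u).
have q0 : forall z, 0 <= q z.
  by move=> z; rewrite /q mulr_ge0 // exprn_ge0 // subr_ge0.
have PU0 : forall u, 0 <= PU u.
  by move=> u; rewrite /PU mulr_ge0 // exprn_ge0 // subr_ge0.
set X := fun U : {set 'I_n} => (0 < #|Xs G0 U|)%N.
set N1 := fun u : nat => \sum_(z : bvec n) q z * (t1 + dd0 - u <= wt z)%:R.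
set N2 := \sum_(z : bvec n) q z * (t1.+1 <= wt z)%:R.
have step1 : err_prob G1 G0 m enc dec beta p <=
    \sum_(U : {set 'I_n}) PU #|U| * ((X U)%:R * N1 #|U| + N2).
  rewrite /err_prob; apply: ler_sum => U _.
  set u := #|U|.
  apply: (@le_trans _ _ (\sum_(s : bvec n | [forall i, (i \notin U) ==> (s i 0 == 0)]) \sum_(z : bvec n)
      (PU u * 2%:R ^- u) * (q z * ((X U)%:R * (t1 + dd0 - u <= wt z)%:R + (t1.+1 <= wt z)%:R)))).
    apply: ler_sum => s _; apply: ler_sum => z _.
    rewrite -mulrA; apply: ler_wpM2l.
      by apply: mulr_ge0; [exact: PU0 | rewrite invr_ge0 exprn_ge0 // ler0n].
    apply: ler_wpM2l; first exact: q0.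
    case E: (dec _ != m); last by apply: addr_ge0; [apply: mulr_ge0|]; rewrite ler0n.
    have := pointwise Henc Hdec E; case/orP => [/andP [HX HA] | HB].
      by rewrite /X HX HA mul1r lerDl ler0n.
    by rewrite HB lerDr mulr_ge0 // ler0n.
  rewrite (eq_bigr (fun _ => PU u * 2%:R ^- u * ((X U)%:R * N1 u + N2))); last first.
    move=> s _; rewrite -mulr_sumr; congr (_ * _).
    rewrite /N1 /N2 mulr_sumr -big_split /=; apply: eq_bigr => z _; ring.
  rewrite sumr_const (_ : #|_| = 2 ^ u)%N; last first.
    by rewrite -(card_Sset U); apply: eq_card => s; rewrite inE.
  rewrite -[_ *+ 2 ^ u]mulr_natr natrX mulrAC -mulrA mulrA -(mulrA (PU u)) mulVf ?mulr1 //.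
  by rewrite expf_neq0 // pnatr_eq0.
apply: (le_trans step1).
rewrite (eq_bigr (fun U : {set 'I_n} => PU #|U| * (X U)%:R * N1 #|U| + PU #|U| * N2)); last first.
  by move=> U _; rewrite mulrDr mulrA.
have HP : \sum_(U : {set 'I_n}) PU #|U| = 1 by exact: sum_binom1.
have HN2 : N2 = \sum_(t1.+1 <= t < n.+1) 'C(n, t)%:R * p ^+ t * (1 - p) ^+ (n - t).
  exact: sum_tail.
rewrite big_split /= -mulr_suml HP mul1r HN2 lerD2r.
rewrite (@sum_part R n (fun U => PU #|U| * (X U)%:R * N1 #|U|)).
rewrite big_geq_mkord /= [X in _ <= X]big_mkcond /=.
apply: ler_sum => u _.
rewrite (eq_bigr (fun U : {set 'I_n} => (PU u * N1 u) * (X U)%:R)); last first.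
  by move=> U /eqP ->; rewrite mulrAC.
rewrite -mulr_sumr.
set Y := \sum_(U : {set 'I_n} | #|U| == u) (X U)%:R.
set S := \sum_(dd0 <= w < u.+1) (B0 G0 w * 'C(n - w, u - w))%:R.
have N10 : 0 <= N1 u by apply: sumr_ge0 => z _; rewrite mulr_ge0 // ler0n.
have un : (u <= n)%N by rewrite -ltnS.
have YC : Y <= 'C(n, u)%:R.
  apply: (@le_trans _ _ (\sum_(U : {set 'I_n} | #|U| == u) 1)).
    by apply: ler_sum => U _; rewrite lern1 leq_b1.
  rewrite sumr_const -[n in 'C(n, _)]card_ord -card_draws ler_nat.
  by apply: eq_leq; apply: eq_card => U; rewrite inE.
have YS : Y <= S.
  apply: (@le_trans _ _ (\sum_(U : {set 'I_n} | #|U| == u) (#|Xs G0 U|)%:R)).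
    apply: ler_sum => U _; rewrite ler_nat /X; case: (#|Xs G0 U|) => //.
  rewrite /S -!natr_sum ler_nat; exact: count_bound.
case: leqP => Hu.
  have HN1 : N1 u = \sum_((t1 + dd0 - u)%N <= t < n.+1) 'C(n, t)%:R * p ^+ t * (1 - p) ^+ (n - t).
    exact: sum_tail.
  have key : Y <= 'C(n, u)%:R * Num.min (S / 'C(n, u)%:R) 1.
    by apply: min_bound => //; rewrite ltr0n bin_gt0.
  apply: le_trans (ler_wpM2l (mulr_ge0 (PU0 u) N10) key) _.
  by rewrite HN1 /PU le_eqVlt; apply/orP; left; apply/eqP; ring.
have S0 : S = 0 by rewrite /S big_geq.
have Y0 : Y = 0.
  apply/eqP; rewrite eq_le; apply/andP; split; first by rewrite -S0.
  by apply: sumr_ge0 => U _; rewrite ler0n.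
by rewrite Y0 mulr0.
Qed.
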